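(* Let $G$ be a trigraph containing a fence gadget $F$ attached to a set $S$ and satisfying the attachment rule in $G$ with set $X$, and let $Y=V(G)\setminus(V(F)\cup S\cup X)$. Let $G'$ be any trigraph of a partial $4$-sequence from $G$ such that $S$ is not contained in a single part of $G'$. Then (i) no part of $G'$ intersects both $S$ and $V(G)\setminus S$, and (ii) no part of $G'$ intersects both $X$ and $Y$.
   Context: A trigraph $G$ consists of a vertex set $V(G)$ and two disjoint sets of unordered pairs of distinct vertices: black edges and red edges; the red graph is formed by the red edges. Contracting two distinct vertices $u,v$ replaces them by a new vertex $w$ such that, for every other vertex $z$, $wz$ is black if $uz,vz$ are both black, a non-edge if both are non-edges, and red otherwise. A partial $d$-sequence from $G$ is a sequence of trigraphs starting at $G$, each obtained from the previous by one contraction, all of maximum red degree at most $d$. Each vertex $u$ of a later trigraph $G'$ corresponds to the set $u(G)$ of vertices of $G$ merged into it; these sets are the parts of $G'$. A fence gadget is a trigraph $F$ on $A\cup B$, $A=\{a_1,\dots,a_6\}$, $B=\{b_1,\dots,b_6\}$, whose black edges are those of the cycles $a_1a_2a_3a_4a_5a_6a_1$ and $b_1b_2b_3b_4b_5b_6b_1$ together with $b_1a_6$, and whose red edges are $a_ib_i$ for $i\in[6]$ and $a_ib_{i+1}$ for $i\in[5]$. Inside a trigraph $G$, $F$ is attached to a nonempty set $S\subseteq V(G)\setminus V(F)$ if every vertex of $A$ is joined by a black edge to every vertex of $S$ and no vertex of $B$ is adjacent to a vertex of $S$. $F$ satisfies the attachment rule in $G$ if $V(F)$ is the vertex set of a connected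 component of the red graph of $G$ and there is a set $X\subseteq V(G)\setminus(V(F)\cup S)$ such that every vertex of $A$ has exactly $X\cup S$ as its set of neighbours outside $V(F)$, every vertex of $B$ has exactly $X$ as its set of neighbours outside $V(F)$ (all these edges black), and every vertex of $X$ is adjacent to every vertex of $S$. *)

(* Defs.v *)
From mathcomp Require Import all_boot.
Set Implicit Arguments. Unset Strict Implicit. Unset Printing Implicit Defensive.

(* A trigraph whose vertices are labelled by elements of a finite type V.
   Only pairs of distinct vertices of [tverts] carry meaningful edge data. *)
Record trigraph (V : finType) := Trigraph {
  tverts : {set V};
  tblack : rel V;
  tred   : rel V }.

Section Trigraphs.
Variable T : finType.

Definition wf_trigraph (bl rd : rel T) : Prop :=
  [/\ symmetric bl, symmetric rd, irreflexive bl, irreflexive rd &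
      forall x y, ~~ (bl x y && rd x y)].

(* During a contraction sequence the vertices of the current trigraph are
   labelled by their parts, i.e. the sets of original vertices merged into
   them.  The initial trigraph has singleton parts. *)
Definition init_trigraph (bl rd : rel T) : trigraph {set T} :=
  Trigraph [set [set x] | x : T]
    (fun A B => [exists x, exists y, [&& A == [set x], B == [set y] & bl x y]])
    (fun A B => [exists x, exists y, [&& A == [set x], B == [set y] & rd x y]]).

Definition contract (H : trigraph {set T}) (u v : {set T})
  : trigraph {set T} :=
  let w := u :|: v in
  let V' := w |: ((tverts H :\ u) :\ v) in
  let adj a b := tblack H a b || tred H a b in
  Trigraph V'
    (fun a b => [&& a \in V', b \in V', a != b &
       if a == w then tblack H u b && tblack H v b
       else if b == w then tblack H a u && tblack H a v
       else tblack H a b])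
    (fun a b => [&& a \in V', b \in V', a != b &
       if a == w then ~~ (tblack H u b && tblack H v b) && (adj u b || adj v b)
       else if b == w then ~~ (tblack H a u && tblack H a v) && (adj a u || adj a v)
       else tred H a b]).

Definition maxred_le (d : nat) (H : trigraph {set T}) : Prop :=
  forall a, a \in tverts H -> #|[set b in tverts H | tred H a b]| <= d.

Inductive in_partial_seq (d : nat) (G0 : trigraph {set T})
  : trigraph {set T} -> Prop :=
| ps_start : maxred_le d G0 -> in_partial_seq d G0 G0
| ps_step H u v : in_partial_seq d G0 H -> u \in tverts H -> v \in tverts H ->
    u != v -> maxred_le d (contract H u v) ->
    in_partial_seq d G0 (contract H u v).

(* Fence gadget on A + B with a_i = inl (i-1), b_i = inr (i-1). *)
Definition fence_black (p q : 'I_6 + 'I_6) : bool :=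
  match p, q with
  | inl i, inl j | inr i, inr j =>
      (val j == (val i).+1 %% 6) || (val i == (val j).+1 %% 6)
  | inr i, inl j => (val i == 0) && (val j == 5)
  | inl j, inr i => (val i == 0) && (val j == 5)
  end.

Definition fence_red (p q : 'I_6 + 'I_6) : bool :=
  match p, q with
  | inl i, inr j | inr j, inl i => (val j == val i) || (val j == (val i).+1)
  | _, _ => false
  end.

Definition contains_fence (bl rd : rel T) (f : 'I_6 + 'I_6 -> T) : Prop :=
  injective f /\
  forall p q, bl (f p) (f q) = fence_black p q /\ rd (f p) (f q) = fence_red p q.

Definition fenceV (f : 'I_6 + 'I_6 -> T) : {set T} := [set f p | p in predT].
Definition fenceA (f : 'I_6 + 'I_6 -> T) : {set T} := [set f (inl i) | i in predT].
Definition fenceB (f : 'I_6 + 'I_6 -> T) : {set T} := [set f (inr i) | i in predT].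

Definition adjacent (bl rd : rel T) x y := bl x y || rd x y.

Definition attached (bl rd : rel T) (f : 'I_6 + 'I_6 -> T) (S : {set T}) : Prop :=
  [/\ S != set0, [disjoint S & fenceV f],
      forall a s, a \in fenceA f -> s \in S -> bl a s &
      forall b s, b \in fenceB f -> s \in S -> ~~ adjacent bl rd b s].

Definition attachment_rule (bl rd : rel T) (f : 'I_6 + 'I_6 -> T)
    (S X : {set T}) : Prop :=
  [/\ exists2 x, x \in fenceV f & fenceV f = [set y | connect rd x y],
      [disjoint X & fenceV f :|: S],
      forall a z, a \in fenceA f -> z \notin fenceV f ->
        adjacent bl rd a z = (z \in X :|: S) /\ (z \in X :|: S -> bl a z),
      forall b z, b \in fenceB f -> z \notin fenceV f ->
        adjacent bl rd b z = (z \in X) /\ (z \in X -> bl b z) &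
      forall x s, x \in X -> s \in S -> adjacent bl rd x s].

End Trigraphs.

(* Main.v *)
Require Import Defs.
From mathcomp Require Import all_boot.
Set Implicit Arguments. Unset Strict Implicit. Unset Printing Implicit Defensive.
Definition isA (p : 'I_6 + 'I_6) := if p is inl _ then true else false.
Definition fadj p q := fence_black p q || fence_red p q.
Definition crit1 p q r := [&& r != p, r != q, ~~ fence_black p r || ~~ fence_black q r & fadj p r || fadj q r].
Definition crit2 r0 r := [&& r != r0, ~~ fence_black r0 r || ~~ isA r & fadj r0 r || isA r].
Definition L6 : seq 'I_6 := [:: @Ordinal 6 0 isT; @Ordinal 6 1 isT; @Ordinal 6 2 isT; @Ordinal 6 3 isT; @Ordinal 6 4 isT; @Ordinal 6 5 isT].
Definition L : seq ('I_6 + 'I_6) := [seq inl i | i <- L6] ++ [seq inr i | i <- L6].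
Lemma comb2 : all (fun r0 => 5 <= count (crit2 r0) L) L.
Proof. vm_compute. reflexivity. Qed.
Lemma comb1 : all (fun p => all (fun q => (p != q) ==> (5 <= count (crit1 p q) L + (if isA p != isA q then 2 else 0))) L) L.
Proof. vm_compute. reflexivity. Qed.
Lemma memL r : r \in L.
Proof. case: r => [[m hm]|[m hm]]; do 6? (case: m hm => [|m] hm; first by []); by []. Qed.
Lemma uniqL : uniq L. Proof. by vm_compute. Qed.
Lemma countL (P : pred ('I_6 + 'I_6)) : count P L <= #|[set r | P r]|.
Proof.
rewrite -size_filter -(card_uniqP (filter_uniq P uniqL)).
apply: subset_leq_card; apply/subsetP => r; rewrite mem_filter inE => /andP[]//.
Qed.
Lemma comb1' p q : p != q -> 5 <= #|[set r | crit1 p q r]| + (if isA p != isA q then 2 else 0).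
Proof.
move=> pq; have := allP (allP comb1 p (memL p)) q (memL q); rewrite pq /=.
move=> h; apply: leq_trans h _; rewrite leq_add2r; exact: countL.
Qed.
Lemma comb2' r0 : 5 <= #|[set r | crit2 r0 r]|.
Proof. apply: leq_trans (allP comb2 r0 (memL r0)) _; exact: countL. Qed.

Section Gen.
Variables (T : finType) (bl rd : rel T).
Hypothesis wf : wf_trigraph bl rd.

Definition allb (P Q : {set T}) := [forall x in P, forall y in Q, bl x y].
Definition somea (P Q : {set T}) := [exists x in P, exists y in Q, adjacent bl rd x y].

Definition Inv0 (H : trigraph {set T}) :=
 [/\ forall x, exists2 P, P \in tverts H & x \in P,
     forall P Q x, P \in tverts H -> Q \in tverts H -> x \in P -> x \in Q -> P = Q,
     forall P, P \in tverts H -> P != set0 &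
     forall P Q, P \in tverts H -> Q \in tverts H -> P != Q ->
        tblack H P Q = allb P Q /\ tred H P Q = ~~ allb P Q && somea P Q].

Lemma allb1 a b : allb [set a] [set b] = bl a b.
Proof.
apply/forall_inP/idP => [h|h x]; first by move/forall_inP: (h a (set11 a)) => /(_ b (set11 b)).
rewrite inE => /eqP->; apply/forall_inP => y; by rewrite inE => /eqP->.
Qed.

Lemma somea1 a b : somea [set a] [set b] = adjacent bl rd a b.
Proof.
apply/exists_inP/idP => [[x]|h]; first by rewrite inE => /eqP-> /exists_inP[y]; rewrite inE => /eqP->.
exists a; first exact: set11. apply/exists_inP; exists b => //; exact: set11.
Qed.

Lemma allbUl u v b : allb (u :|: v) b = allb u b && allb v b.
Proof.
apply/forall_inP/andP => [h|[/forall_inP h1 /forall_inP h2] x].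
  by split; apply/forall_inP => x xi; apply: h; rewrite inE xi ?orbT.
by rewrite inE => /orP[]; [apply: h1|apply: h2].
Qed.

Lemma allbUr u v b : allb b (u :|: v) = allb b u && allb b v.
Proof.

apply/forall_inP/andP => [h|[/forall_inP h1 /forall_inP h2] x xb].
  split; apply/forall_inP => x xb; move/forall_inP: (h x xb) => h';
  apply/forall_inP => y yi; apply: h'; by rewrite inE yi ?orbT.
move/forall_inP: (h1 x xb) => g1; move/forall_inP: (h2 x xb) => g2.
by apply/forall_inP => y; rewrite inE => /orP[]; [apply: g1|apply: g2].
Qed.

Lemma someaUl u v b : somea (u :|: v) b = somea u b || somea v b.
Proof.
apply/exists_inP/orP => [[x]|[/exists_inP[x xi h]|/exists_inP[x xi h]]].
  by rewrite inE => /orP[] xi h; [left|right]; apply/exists_inP; exists x.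
by exists x; rewrite // inE xi.
by exists x; rewrite // inE xi orbT.
Qed.

Lemma someaUr u v b : somea b (u :|: v) = somea b u || somea b v.
Proof.
apply/exists_inP/orP => [[x xb /exists_inP[y]]|[/exists_inP[x xb /exists_inP[y yi h]]|/exists_inP[x xb /exists_inP[y yi h]]]].
  rewrite inE => /orP[] yi h; [left|right]; apply/exists_inP; exists x => //; apply/exists_inP; by exists y.
by exists x => //; apply/exists_inP; exists y; rewrite // inE yi.
by exists x => //; apply/exists_inP; exists y; rewrite // inE yi orbT.
Qed.

Lemma allb_somea P Q : P != set0 -> Q != set0 -> allb P Q -> somea P Q.
Proof.
case/set0Pn=> x xP /set0Pn[y yQ] /forall_inP/(_ x xP)/forall_inP/(_ y yQ) h.
apply/exists_inP; exists x => //; apply/exists_inP; exists y => //; by rewrite /adjacent h.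
Qed.

Lemma Inv0_init : Inv0 (init_trigraph bl rd).
Proof.
case: wf => sb sr ib ir dj.
split.
- move=> x; exists [set x]; [apply/imsetP; by exists x | by rewrite set11].
- by move=> P Q x /imsetP[a _ ->] /imsetP[b _ ->]; rewrite !inE => /eqP-> /eqP->.
- move=> P /imsetP[a _ ->]; apply/set0Pn; exists a; exact: set11.
- move=> P Q /imsetP[a _ ->] /imsetP[b _ ->] neq /=.
  have E (r : rel T) : [exists x, exists y, [&& [set a] == [set x], [set b] == [set y] & r x y]] = r a b.
    apply/existsP/idP => [[x /existsP[y /and3P[/eqP e1 /eqP e2 h]]]|h].
      by move/set1_inj: e1 => ->; move/set1_inj: e2 => ->.
    by exists a; apply/existsP; exists b; rewrite !eqxx h.
  rewrite !E allb1 somea1 /adjacent; split => //.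
  by move: (dj a b); case: (bl a b); case: (rd a b).
Qed.

Lemma memV' (H : trigraph {set T}) u v P :
  (P \in tverts (contract H u v)) = (P == u :|: v) || [&& P != v, P != u & P \in tverts H].
Proof. by rewrite /= !inE. Qed.

Lemma Inv0_contract H u v : Inv0 H -> u \in tverts H -> v \in tverts H -> u != v ->
  Inv0 (contract H u v).
Proof.
case: wf => sb sr ib ir dj.
case=> cov uniq ne sem uH vH uv.
have disj P Q x : P \in tverts H -> Q \in tverts H -> P != Q -> x \in P -> x \in Q -> False.
  by move=> PH QH PQ xP xQ; move/eqP: PQ; apply; apply: uniq xP xQ.
have neu : u != set0 by apply: ne.
have nev : v != set0 by apply: ne.
split.
- move=> x; case: (cov x) => P PH xP.
  case: (eqVneq P u) => [Pu|Pu]; first by exists (u :|: v); rewrite ?memV' ?eqxx // inE -Pu xP.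
  case: (eqVneq P v) => [Pv|Pv]; first by exists (u :|: v); rewrite ?memV' ?eqxx // inE -Pv xP orbT.
  by exists P; rewrite // memV' Pu Pv PH orbT.
- move=> P Q x; rewrite !memV' => /orP[/eqP->|/and3P[Pv Pu PH]] /orP[/eqP->|/and3P[Qv Qu QH]] //.
  + rewrite inE => /orP[] xi xQ; exfalso; [apply: (disj u Q x) => //; rewrite eq_sym //|apply: (disj v Q x) => //; rewrite eq_sym //].
  + move=> xP; rewrite inE => /orP[] xi; exfalso; [apply: (disj u P x) => //; rewrite eq_sym //|apply: (disj v P x) => //; rewrite eq_sym //].
  + by apply: uniq.
- move=> P; rewrite memV' => /orP[/eqP->|/and3P[_ _ PH]]; last exact: ne.
  case/set0Pn: neu => x xu; apply/set0Pn; exists x; by rewrite inE xu.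
- move=> a b aH bH ab.
  have aH' := aH; have bH' := bH.
  rewrite memV' in aH'; rewrite memV' in bH'.
  have sem' P : P \in tverts H -> P != set0 -> (P != u) -> (P != v) ->
      [/\ tblack H u P = allb u P, tblack H v P = allb v P, tblack H P u = allb P u, tblack H P v = allb P v &
        [/\ tred H u P = ~~ allb u P && somea u P, tred H v P = ~~ allb v P && somea v P,
            tred H P u = ~~ allb P u && somea P u & tred H P v = ~~ allb P v && somea P v]].
    move=> PH P0 Pu Pv.
    have uP : u != P by rewrite eq_sym.
    have vP : v != P by rewrite eq_sym.
    have [e1 e2] := sem u P uH PH uP.
    have [e3 e4] := sem v P vH PH vP.
    have [e5 e6] := sem P u PH uH Pu.
    have [e7 e8] := sem P v PH vH Pv.
    by split.
  rewrite /= aH bH ab /=.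
  case: (eqVneq a (u :|: v)) => [aw|aw].
    have [/eqP bw|/and3P[bv bu bH0]] := orP bH'; first by rewrite aw bw eqxx in ab.
    have b0 := ne b bH0.
    have [e1 e2 _ _ [r1 r2 _ _]] := sem' b bH0 b0 bu bv.
    rewrite e1 e2 r1 r2 ?aw allbUl someaUl; split => //.
    have s1 := allb_somea neu b0; have s2 := allb_somea nev b0.
    move: s1 s2; case: (allb u b) => [/(_ isT) ->|_]; case: (allb v b) => [/(_ isT) ->|_] //=; by rewrite ?orbT.
  have [/eqP a'w|/and3P[av au aH0]] := orP aH'; first by rewrite a'w eqxx in aw.
  have a0 := ne a aH0.
  case: (eqVneq b (u :|: v)) => [bw|bw].
    have [_ _ e1 e2 [_ _ r1 r2]] := sem' a aH0 a0 au av.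
    rewrite e1 e2 r1 r2 ?bw allbUr someaUr; split => //.
    have s1 := allb_somea a0 neu; have s2 := allb_somea a0 nev.
    move: s1 s2; case: (allb a u) => [/(_ isT) ->|_]; case: (allb a v) => [/(_ isT) ->|_] //=; by rewrite ?orbT.
  have [/eqP b'w|/and3P[bv bu bH0]] := orP bH'; first by rewrite b'w eqxx in bw.
  exact: sem.
Qed.
End Gen.

Lemma countL' (P : pred ('I_6 + 'I_6)) n : n <= count P L -> n <= #|[set r | P r]|.
Proof. move=> h; apply: leq_trans h (countL P). Qed.

Section Main.
Variables (T : finType) (bl rd : rel T) (f : 'I_6 + 'I_6 -> T) (S X : {set T}).
Hypotheses (wf : wf_trigraph bl rd) (cf : contains_fence bl rd f)
  (att : attached bl rd f S) (ar : attachment_rule bl rd f S X).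

Definition J1 (H : trigraph {set T}) := forall P p q, P \in tverts H -> f p \in P -> f q \in P -> p = q.
Definition J2 (H : trigraph {set T}) := forall P s t, P \in tverts H -> s \in P -> t \in P -> s \in S -> t \notin S -> False.
Definition J3 (H : trigraph {set T}) := forall P x y, P \in tverts H -> x \in P -> y \in P -> x \in X ->
   y \notin fenceV f :|: S :|: X -> False.

Lemma red_many H w (Z : {set T}) : Inv0 bl rd H -> w \in tverts H -> maxred_le 4 H ->
  (forall z, z \in Z -> z \notin w /\ exists2 t1, t1 \in w & ~~ bl t1 z /\ exists2 t2, t2 \in w & adjacent bl rd t2 z) ->
  (forall z1 z2 P, z1 \in Z -> z2 \in Z -> P \in tverts H -> z1 \in P -> z2 \in P -> z1 = z2) ->
  #|Z| <= 4.
Proof.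
case=> cov uniq ne sem wH mr hZ inj.
pose pt z := odflt set0 [pick P in tverts H | z \in P].
have ptP z : pt z \in tverts H /\ z \in pt z.
  rewrite /pt; case: pickP => [P /andP[]|/= none]; first done.
  case: (cov z) => P PH zP; move: (none P); by rewrite PH zP.
have -> : #|Z| = #|pt @: Z|.
  rewrite card_in_imset // => z1 z2 z1Z z2Z e.
  case: (ptP z1) => h1 m1; case: (ptP z2) => h2 m2.
  apply: (inj z1 z2 (pt z1)) => //; by rewrite e.
apply: leq_trans (mr w wH); apply: subset_leq_card; apply/subsetP => P /imsetP[z zZ ->].
rewrite inE; case: (ptP z) => h m; rewrite h /=.
case: (hZ z zZ) => nzw [t1 t1w [nb [t2 t2w ad]]].
have neq: w != pt z by apply: contraNneq nzw => ->.
rewrite (sem _ _ wH h neq).2; apply/andP; split.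
  apply/negP => /forall_inP /(_ t1 t1w) /forall_inP /(_ z m); by apply/negP.
apply/exists_inP; exists t2 => //; apply/exists_inP; by exists z.
Qed.

Lemma fb p q : bl (f p) (f q) = fence_black p q.
Proof. by case: (cf.2 p q). Qed.
Lemma fadjE p q : adjacent bl rd (f p) (f q) = fadj p q.
Proof. by case: (cf.2 p q) => h1 h2; rewrite /adjacent h1 h2. Qed.
Lemma fV r : f r \in fenceV f.
Proof. by apply/imsetP; exists r. Qed.
Lemma fnS r : f r \notin S.
Proof. by case: att => _ d _ _; rewrite (disjointFl d (fV r)). Qed.
Lemma XnFS x : x \in X -> (x \notin fenceV f) && (x \notin S).
Proof.
case: ar => _ d _ _ _ xX; move: (disjointFr d xX); rewrite inE.
by case: (x \in fenceV f); case: (x \in S).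
Qed.
Lemma adj_sym x y : adjacent bl rd x y = adjacent bl rd y x.
Proof. by case: wf => sb sr _ _ _; rewrite /adjacent sb sr. Qed.
Lemma nadj_nbl x y : ~~ adjacent bl rd x y -> ~~ bl x y.
Proof. by rewrite /adjacent negb_or => /andP[]. Qed.
Lemma A_S i s : s \in S -> adjacent bl rd s (f (inl i)).
Proof.
case: att => _ _ h _ sS; rewrite adj_sym /adjacent h //; by apply/imsetP; exists i.
Qed.
Lemma B_S i s : s \in S -> ~~ bl s (f (inr i)).
Proof.
case: att => _ _ _ h sS; apply: nadj_nbl; rewrite adj_sym; apply: h => //; by apply/imsetP; exists i.
Qed.
Lemma B_S' i s : s \in S -> ~~ bl (f (inr i)) s.
Proof. by case: wf => sb _ _ _ _; rewrite sb; apply: B_S. Qed.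
Lemma A_S' i s : s \in S -> adjacent bl rd (f (inl i)) s.
Proof. by rewrite adj_sym; apply: A_S. Qed.
Lemma A_out i z : z \notin fenceV f -> adjacent bl rd z (f (inl i)) = (z \in X :|: S).
Proof.
case: ar => _ _ h _ _ zF; rewrite adj_sym; case: (h (f (inl i)) z) => //; by apply/imsetP; exists i.
Qed.
Lemma B_out i z : z \notin fenceV f -> adjacent bl rd z (f (inr i)) = (z \in X).
Proof.
case: ar => _ _ _ h _ zF; rewrite adj_sym; case: (h (f (inr i)) z) => //; by apply/imsetP; exists i.
Qed.

Lemma card_drop (R : {set 'I_6 + 'I_6}) (W : {set T}) :
  (forall a b, f a \in W -> f b \in W -> a = b) -> #|R| <= #|[set r in R | f r \notin W]|.+1.
Proof.
move=> h.
have sub : R \subset [set r in R | f r \notin W] :|: [set r | f r \in W].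
  apply/subsetP => r rR; rewrite !inE rR /=; by case: (f r \in W).
apply: leq_trans (subset_leq_card sub) _; apply: leq_trans (leq_card_setU _ _) _.
rewrite -(addn1 #|[set r in R | f r \notin W]|) leq_add2l.
apply/card_le1_eqP => a b ha hb; rewrite !inE in ha hb; exact: h hb ha.
Qed.

Lemma step H u v : Inv0 bl rd H -> J1 H -> J2 H -> J3 H ->
  u \in tverts H -> v \in tverts H -> u != v ->
  maxred_le 4 (contract H u v) -> (forall P, P \in tverts (contract H u v) -> ~~ (S \subset P)) ->
  [/\ Inv0 bl rd (contract H u v), J1 (contract H u v), J2 (contract H u v) & J3 (contract H u v)].
Proof.
move=> I0 j1 j2 j3 uH vH uv mr hS.
have I0' := Inv0_contract wf I0 uH vH uv.
set H' := contract H u v in mr hS I0' *.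
set w := u :|: v.
have wH : w \in tverts H' by rewrite memV' eqxx.
have old P : P \in tverts H' -> P != w -> P \in tverts H.
  by rewrite memV' => /orP[/eqP->|/and3P[_ _ ->]] //; rewrite eqxx.
case: (I0) => cov uniq ne sem.
case: (I0') => cov' uniq' ne' sem'.
have inw x : (x \in w) = (x \in u) || (x \in v) by rewrite inE.
have j1' : J1 H'.
  move=> P p q PH fp fq.
  case: (eqVneq P w) => [Pw|Pw]; last exact: (j1 P p q (old P PH Pw)).
  subst P; apply/eqP; apply/negPn/negP => pq; exfalso.
  have loc r : f r \in w -> r = p \/ r = q.
    rewrite !inw in fp fq * => fr.
    case/orP: fr => fr; case/orP: fp => fp'; case/orP: fq => fq';
    first [ by left; apply: (j1 _ _ _ uH fr fp') | by left; apply: (j1 _ _ _ vH fr fp')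
          | by right; apply: (j1 _ _ _ uH fr fq') | by right; apply: (j1 _ _ _ vH fr fq')
          | by case/eqP: pq; apply: (j1 _ _ _ uH fp' fq') | by case/eqP: pq; apply: (j1 _ _ _ vH fp' fq') ].
  have nSw s : s \in S -> s \notin w.
    move=> sS; apply/negP; rewrite inw => si.
    rewrite !inw in fp fq.
    case/orP: si => si; case/orP: fp => fp'; case/orP: fq => fq';
    first [ by apply: (j2 _ _ _ uH si fp' sS (fnS p)) | by apply: (j2 _ _ _ uH si fq' sS (fnS q))
          | by apply: (j2 _ _ _ vH si fp' sS (fnS p)) | by apply: (j2 _ _ _ vH si fq' sS (fnS q))
          | by case/eqP: pq; apply: (j1 _ _ _ uH fp' fq') | by case/eqP: pq; apply: (j1 _ _ _ vH fp' fq') ].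
  have [s1 s1S] : exists s1, s1 \in S by case: att => /set0Pn.
  case: (cov' s1) => P1 P1H s1P1.
  case/subsetPn: (hS P1 P1H) => s2 s2S s2P1.
  have s12 : s1 != s2 by apply: contraNneq s2P1 => <-.
  pose Z := f @: [set r | crit1 p q r] :|: (if isA p != isA q then [set s1; s2] else set0).
  have cardZ : 5 <= #|Z|.
    have := comb1' pq; rewrite /Z; case: (isA p != isA q) => h.
      rewrite cardsU cards2 s12 card_imset; last by case: cf.
      apply: (leq_trans h).
      have -> : f @: [set r | crit1 p q r] :&: [set s1; s2] = set0.
        apply/setP => z; rewrite !inE; apply/negP => /andP[/imsetP[r _ ->]].
        by move=> /orP[]/eqP e; move: (fnS r); rewrite e ?s1S ?s2S.
      by rewrite cards0 subn0 /=.
    rewrite setU0 card_imset; [by rewrite addn0 in h | by case: cf].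
  have ZP z : z \in Z -> z \notin w /\ exists2 t1, t1 \in w & ~~ bl t1 z /\ exists2 t2, t2 \in w & adjacent bl rd t2 z.
    rewrite /Z inE => /orP[/imsetP[r]|].
      rewrite inE => /and4P[rp rq nb ad] ->; split.
        by apply/negP => /loc[]/eqP; rewrite ?(negbTE rp) ?(negbTE rq).
      case/orP: nb => nb; [exists (f p) => //; rewrite fb; split => //|exists (f q) => //; rewrite fb; split => //];
      (case/orP: ad => ad; [exists (f p) => //; by rewrite fadjE|exists (f q) => //; by rewrite fadjE]).
    case: ifP => sd; last by rewrite inE.
    move=> zS; have zS' : z \in S by move: zS; rewrite !inE => /orP[]/eqP->.
    split; first exact: nSw.
    move: sd; case Ep: p => [i|i]; case Eq: q => [j|j] //= _.
      exists (f (inr j)); [by rewrite -Eq | split; first by apply: B_S'].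
      exists (f (inl i)); [by rewrite -Ep | by apply: A_S'].
    exists (f (inr i)); [by rewrite -Ep | split; first by apply: B_S'].
    exists (f (inl j)); [by rewrite -Eq | by apply: A_S'].
  have: #|Z| <= 4; last by rewrite leqNgt (leq_trans _ cardZ).
  apply: (red_many I0' wH mr ZP).
  move=> z1 z2 P z1Z z2Z PH2 z1P z2P.
  have Pw : P != w by apply: contraTneq z1P => ->; case: (ZP z1 z1Z).
  have PH0 := old P PH2 Pw.
  have inS z : z \in (if isA p != isA q then [set s1; s2] else set0) -> z = s1 \/ z = s2.
    by case: ifP; rewrite !inE // => _ /orP[]/eqP->; [left|right].
  have inS' z : z = s1 \/ z = s2 -> z \in S by case=> ->.
  move: z1Z z2Z; rewrite /Z !inE => /orP[/imsetP[r1 _ e1]|/inS z1S] /orP[/imsetP[r2 _ e2]|/inS z2S].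
  - by subst z1 z2; rewrite (j1 _ _ _ PH0 z1P z2P).
  - by subst z1; exfalso; apply: (j2 _ _ _ PH0 z2P z1P (inS' _ z2S) (fnS r1)).
  - by subst z2; exfalso; apply: (j2 _ _ _ PH0 z1P z2P (inS' _ z1S) (fnS r2)).
  - have PP1 : s2 \in P -> s1 \in P -> False.
      move=> sP s1P; have E := uniq' _ _ _ PH2 P1H s1P s1P1; by rewrite -E sP in s2P1.
    by case: z1S z2S => e1 [] e2; subst z1 z2 => //; exfalso; exact: PP1.
have injF (Z : {set T}) : Z \subset fenceV f -> forall z1 z2 P, z1 \in Z -> z2 \in Z ->
    P \in tverts H' -> z1 \in P -> z2 \in P -> z1 = z2.
  move=> /subsetP sub z1 z2 P z1Z z2Z PH2 z1P z2P.
  case/imsetP: (sub z1 z1Z) => r1 _ e1; case/imsetP: (sub z2 z2Z) => r2 _ e2; subst z1 z2.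
  by rewrite (j1' _ _ _ PH2 z1P z2P).
have subF (R : {set 'I_6 + 'I_6}) : f @: R \subset fenceV f.
  by apply/subsetP => z /imsetP[r _ ->]; exact: fV.
have cardF (R : {set 'I_6 + 'I_6}) : #|R| <= #|[set r in R | f r \notin w]|.+1.
  apply: card_drop => a b; exact: j1' _ _ _ wH.
have j2' : J2 H'.
  move=> P s t PH sP tP sS tnS.
  case: (eqVneq P w) => [Pw|Pw]; last exact: (j2 _ _ _ (old P PH Pw) sP tP sS tnS).
  subst P.
  case: (boolP (t \in fenceV f)) => [/imsetP[r0 _ e0]|tnF].
  - subst t. pose Z := f @: [set r | crit2 r0 r].
    have c : 5 <= #|Z| by rewrite /Z card_imset ?comb2' //; case: cf.
    have: #|Z| <= 4; last by rewrite leqNgt c.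
    apply: (red_many I0' wH mr); last by apply: injF; apply: subF.
    move=> z /imsetP[r]; rewrite inE => /and3P[rr0 nb ad] ->; split.
      apply/negP => frw; move: rr0; by rewrite (j1' _ _ _ wH frw tP) eqxx.
    case: r rr0 nb ad => i rr0 nb ad /=.
      exists (f r0) => //; rewrite fb; split; first by rewrite orbF in nb.
      exists s => //; exact: A_S.
    exists s => //; split; first exact: B_S.
    exists (f r0) => //; rewrite fadjE; by rewrite orbF in ad.
  case: (boolP (t \in X)) => tX.
  - pose Z := f @: [set r in [set r | ~~ isA r] | f r \notin w].
    have c : 5 <= #|Z|.
      rewrite /Z card_imset; last by case: cf.
      rewrite -ltnS; apply: leq_trans (cardF _); apply: countL'; by vm_compute.
    have: #|Z| <= 4; last by rewrite leqNgt c.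
    apply: (red_many I0' wH mr); last by apply: injF; apply: subF.
    move=> z /imsetP[r]; rewrite !inE => /andP[nA frw] ->; split => //.
    case: r nA frw => // i _ _.
    exists s => //; split; first exact: B_S.
    exists t => //; by rewrite B_out.
  - pose Z := f @: [set r in [set r | isA r] | f r \notin w].
    have c : 5 <= #|Z|.
      rewrite /Z card_imset; last by case: cf.
      rewrite -ltnS; apply: leq_trans (cardF _); apply: countL'; by vm_compute.
    have: #|Z| <= 4; last by rewrite leqNgt c.
    apply: (red_many I0' wH mr); last by apply: injF; apply: subF.
    move=> z /imsetP[r]; rewrite !inE => /andP[nA frw] ->; split => //.
    case: r nA frw => // i _ _.
    exists t => //; split.
      by apply: nadj_nbl; rewrite A_out // inE (negbTE tX) (negbTE tnS).
    exists s => //; exact: A_S.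
have j3' : J3 H'.
  move=> P x y PH xP yP xX yn.
  case: (eqVneq P w) => [Pw|Pw]; last exact: (j3 _ _ _ (old P PH Pw) xP yP xX yn).
  subst P.
  have /andP[xnF xnS] := XnFS xX.
  rewrite !inE !negb_or in yn; case/andP: yn => /andP[ynF ynS] ynX.
  pose Z := f @: [set r in [set r | true] | f r \notin w].
  have c : 5 <= #|Z|.
    rewrite /Z card_imset; last by case: cf.
    rewrite -ltnS; apply: leq_trans (cardF _); apply: countL'; by vm_compute.
  have: #|Z| <= 4; last by rewrite leqNgt c.
  apply: (red_many I0' wH mr); last by apply: injF; apply: subF.
  move=> z /imsetP[r]; rewrite !inE => /andP[_ frw] ->; split => //.
  exists y => //; split.
    apply: nadj_nbl; case: r frw => i _; by rewrite ?A_out ?B_out // ?inE (negbTE ynX) ?(negbTE ynS).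
  exists x => //; case: r frw => i _; by rewrite ?A_out ?B_out // ?inE xX.
by split.
Qed.


Lemma allJ G' : in_partial_seq 4 (init_trigraph bl rd) G' ->
  (forall P, P \in tverts G' -> ~~ (S \subset P)) -> [/\ Inv0 bl rd G', J1 G', J2 G' & J3 G'].
Proof.
elim => [_ |H u v _ IH uH vH uv mr] hS.
  split; first exact: Inv0_init.
  - move=> P p q /imsetP[x _ ->]; rewrite !inE => /eqP e1 /eqP e2.
    case: cf => inj _; apply: inj; by rewrite e1 e2.
  - by move=> P s t /imsetP[x _ ->]; rewrite !inE => /eqP-> /eqP-> ->.
  - move=> P x y /imsetP[z _ ->]; rewrite !inE => /eqP-> /eqP-> ->.
    by rewrite !orbT.
have wH : u :|: v \in tverts (contract H u v) by rewrite memV' eqxx.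
have hS0 : forall P, P \in tverts H -> ~~ (S \subset P).
  move=> P PH; apply/negP => SP.
  case: (eqVneq P u) => [Pu|Pu].
    apply: (negP (hS _ wH)); apply: subset_trans SP _; rewrite Pu; exact: subsetUl.
  case: (eqVneq P v) => [Pv|Pv].
    apply: (negP (hS _ wH)); apply: subset_trans SP _; rewrite Pv; exact: subsetUr.
  by apply: (negP (hS P _)) => //; rewrite memV' Pu Pv PH orbT.
case: (IH hS0) => I0 j1 j2 j3.
exact: step.
Qed.
End Main.


Theorem lemma4p9 (T : finType) (bl rd : rel T) (f : 'I_6 + 'I_6 -> T)
    (S X : {set T}) (G' : trigraph {set T}) :
  wf_trigraph bl rd ->
  contains_fence bl rd f ->
  attached bl rd f S ->
  attachment_rule bl rd f S X ->
  let Y := ~: (fenceV f :|: S :|: X) in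
  in_partial_seq 4 (init_trigraph bl rd) G' ->
  (forall P, P \in tverts G' -> ~~ (S \subset P)) ->
  (forall P, P \in tverts G' -> ~~ ((P :&: S != set0) && (P :\: S != set0))) /\
  (forall P, P \in tverts G' -> ~~ ((P :&: X != set0) && (P :&: Y != set0))).
Proof.
move=> wf cf att ar Y seq hS.
case: (allJ wf cf att ar seq hS) => _ _ j2 j3; split.
  move=> P PH; apply/negP => /andP[/set0Pn[s /setIP[sP sS]] /set0Pn[t /setDP[tP tnS]]].
  exact: (j2 P s t PH sP tP sS tnS).
move=> P PH; apply/negP => /andP[/set0Pn[x /setIP[xP xX]] /set0Pn[y /setIP[yP yY]]].
apply: (j3 P x y PH xP yP xX); move: yY; by rewrite /Y inE.
Qed.
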